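(* For all large enough constants $C_1$ the following holds. Let $n\ge2$, let $V^{(1)},V^{(2)},\ldots$ be iterates of gradient descent $V^{(t+1)}=V^{(t)}-\alpha_t\nabla L_t$ (any initialization, any step-sizes). For any $t\ge1$, if $L_t\le 1/n^{1+C_1}$, then \[ \lVert\nabla L_t\rVert\ge\frac{5L_t\log(1/L_t)}{6\lVert V^{(t)}\rVert}. \]
   Context: $\log$ is the natural logarithm. Standing assumption: $h=1/p$ with $p\ge1$. Huberized ReLU: $\phi(z)=0$ for $z<0$, $z^2/(2h)$ for $z\in[0,h]$, $z-h/2$ for $z>h$. Data $(x_1,y_1),\ldots,(x_n,y_n)$ with $x_s\in\mathbb{R}^{d+1}$, $\lVert x_s\rVert=1$, $y_s\in\{-1,1\}$. For $V\in\mathbb{R}^{2p\times(d+1)}$ with rows $v_1,\ldots,v_{2p}$ and fixed $u_1=\cdots=u_p=1$, $u_{p+1}=\cdots=u_{2p}=-1$: $f_V(x)=\sum_{i=1}^{2p}u_i\phi(v_i\cdot x)$, $L(V)=\frac1n\sum_s\ln(1+\exp(-y_sf_V(x_s)))$. $L_t=L(V^{(t)})$, $\nabla L_t=\nabla_VL|_{V=V^{(t)}}$, and $\lVert\cdot\rVert$ is the Frobenius norm. *)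

(* Defs.v *)
From HB Require Import structures.
From mathcomp Require Import all_boot all_order all_algebra.
From mathcomp Require Import all_classical all_reals all_analysis.
From mathcomp Require Import Rstruct Rstruct_topology.


Set Implicit Arguments.
Unset Strict Implicit.
Unset Printing Implicit Defensive.

Import Order.TTheory GRing.Theory Num.Theory.
Local Open Scope ring_scope.

Notation RR := Rdefinitions.R.

Definition hwidth (p : nat) : RR := (p%:R)^-1.

Definition hrelu (h z : RR) : RR :=
  if z < 0 then 0 else if z <= h then z ^+ 2 / (2 * h) else z - h / 2.

Definition uw (p : nat) (i : 'I_(2 * p)) : RR := if (nat_of_ord i < p)%N then 1 else -1.

Definition rowdot (p d : nat) (V : 'M[RR]_(2 * p, d.+1)) (i : 'I_(2 * p))
  (x : 'rV[RR]_(d.+1)) : RR := \sum_(j < d.+1) V i j * x 0 j.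

Definition fnet (p d : nat) (V : 'M[RR]_(2 * p, d.+1)) (x : 'rV[RR]_(d.+1)) : RR :=
  \sum_(i < 2 * p) uw i * hrelu (hwidth p) (rowdot V i x).

Definition loss (n p d : nat) (x : 'I_n -> 'rV[RR]_(d.+1)) (y : 'I_n -> RR)
  (V : 'M[RR]_(2 * p, d.+1)) : RR :=
  (n%:R)^-1 * \sum_(s < n) ln (1 + expR (- (y s * fnet V (x s)))).

Definition gradM (m k : nat) (F : 'M[RR]_(m, k) -> RR) (V : 'M[RR]_(m, k))
  : 'M[RR]_(m, k) :=
  \matrix_(i < m, j < k) derive1 (fun r : RR => (F (V + r *: delta_mx i j) : RR^o)) 0.

Definition frob (m k : nat) (A : 'M[RR]_(m, k)) : RR :=
  Num.sqrt (\sum_(i < m) \sum_(j < k) A i j ^+ 2).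

Definition vnorm (k : nat) (v : 'rV[RR]_k) : RR :=
  Num.sqrt (\sum_(j < k) v 0 j ^+ 2).

(* Main.v *)
Require Import Defs.
From HB Require Import structures.
From mathcomp Require Import all_boot all_order all_algebra.
From mathcomp Require Import all_classical all_reals all_analysis.
From mathcomp Require Import Rstruct Rstruct_topology.
From mathcomp Require Import ring lra.
Import Order.TTheory GRing.Theory Num.Theory.
Local Open Scope ring_scope.

Notation isD x f d := (@is_derive _ RR^o RR^o (x : RR) (1 : RR) (f : RR -> RR) (d : RR)).

Lemma D_comp (f g : RR -> RR) (x a b : RR) :
  isD (g x) f a -> isD x g b -> isD x (fun r => f (g r)) (a * b).
Proof. move=> H1 H2; exact: (@is_derive1_comp RR f g x a b H1 H2). Qed.
Arguments D_comp {f g x a b}.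

Lemma D_aff (c d x : RR) : isD x (fun r : RR => c + r * d) d.
Proof.
apply/is_derive1_caratheodory; exists (fun _ => d); split => //.
- by move=> z; ring.
- exact: cst_continuous.
Qed.

Lemma D_sum n (F : 'I_n -> RR -> RR) (x : RR) (dF : 'I_n -> RR) :
  (forall k, isD x (F k) (dF k)) -> isD x (fun r => \sum_(k < n) F k r) (\sum_(k < n) dF k).
Proof.
move=> H.
have := @is_derive_sum _ RR^o RR^o n F x 1 dF H.
by rewrite fct_sumE.
Qed.

Lemma D_expR (x : RR) : isD x (@expR RR) (expR x).
Proof. exact: is_derive_expR. Qed.

Lemma D_ln (x : RR) : 0 < x -> isD x (@ln RR) x^-1.
Proof. move=> x0; exact: is_derive1_ln. Qed.
Definition dphi (h z : RR) : RR := if z < 0 then 0 else if z <= h then z / h else 1.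

Lemma hrelu_taylor h z w : 0 < h ->
  `|hrelu h w - hrelu h z - dphi h z * (w - z)| <= (w - z) ^+ 2 / (2 * h).
Proof.
move=> h0.
have E : forall a, a ^+ 2 / (2 * h) = a ^+ 2 * h^-1 / 2 by move=> a; rewrite invfM; field; rewrite gt_eqF.
rewrite /hrelu /dphi !E.
have hk : h * h^-1 = 1 by rewrite divff // gt_eqF.
have k0 : 0 < h^-1 by rewrite invr_gt0.
rewrite -[z / h]/(z * h^-1).
set k := h^-1 in hk k0 *.
have hkh : k * h * h = h by rewrite mulrC mulrA hk mul1r.
have hkw : k * h * w = w by rewrite (mulrC k) hk mul1r.
have hkz : k * h * z = z by rewrite (mulrC k) hk mul1r.
have p1 : 0 <= k * (w - z) ^+ 2 by rewrite mulr_ge0 // ?sqr_ge0 // ltW.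
have p2 : 0 <= k * w ^+ 2 by rewrite mulr_ge0 // ?sqr_ge0 // ltW.
have p3 : 0 <= k * (w - h) ^+ 2 by rewrite mulr_ge0 // ?sqr_ge0 // ltW.
have P1 : z < 0 -> 0 <= w -> 0 <= k * (- z) * (2 * w - z).
  move=> a b; apply: mulr_ge0; [apply: mulr_ge0|]; [exact: ltW|lra|lra].
have P2 : 0 <= z -> z <= h -> h < w -> 0 <= k * (h - z) * (2 * w - z - h).
  move=> a b c; apply: mulr_ge0; [apply: mulr_ge0|]; [exact: ltW|lra|lra].
have P3 : h < z -> w <= h -> 0 <= k * (z - h) * (z + h - 2 * w).
  move=> a b; apply: mulr_ge0; [apply: mulr_ge0|]; [exact: ltW|lra|lra].
rewrite ler_norml.
case: (ltrP w 0) => hw; case: (ltrP z 0) => hz; try case: (lerP w h) => hw2; try case: (lerP z h) => hz2; apply/andP; split; nra.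
Qed.


Lemma hrelu_derive (h z : RR) : 0 < h -> @is_derive _ RR^o RR^o z 1 (hrelu h) (dphi h z).
Proof.
move=> h0; apply/is_derive1_caratheodory.
exists (fun w => if w == z then dphi h z else (hrelu h w - hrelu h z) / (w - z)); split.
- move=> w; case: eqP => [->|/eqP]; first by rewrite !subrr mulr0.
  by rewrite -subr_eq0 => /divfK ->.
- rewrite /prop_for /continuous_at eqxx.
  apply/cvgrPdist_lt => e e0.
  have e2h : 0 < e * h by rewrite mulr_gt0.
  near=> w.
  case: eqP => [_|/eqP wz]; first by rewrite subrr normr0.
  have wz0 : w - z != 0 by rewrite subr_eq0.
  have -> : dphi h z - (hrelu h w - hrelu h z) / (w - z) =
     - ((hrelu h w - hrelu h z - dphi h z * (w - z)) / (w - z)).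
    by field.
  rewrite normrN normf_div.
  have nz : 0 < `|w - z| by rewrite normr_gt0.
  rewrite ltr_pdivrMr //.
  apply: (le_lt_trans (hrelu_taylor h z w h0)).
  have hb : `|w - z| < e * h.
    near: w; have := near_ball z (e * h) e2h; apply: filterS => w.
    rewrite /ball /= distrC. done.
  rewrite -real_normK ?num_real //.
  rewrite ltr_pdivrMr ?mulr_gt0 //.
  set a := `|w - z| in nz hb *.
  nra.
- by rewrite eqxx.
Unshelve. all: by end_near. Qed.

Lemma D_ext (f g : RR -> RR) (x d d' : RR) :
  (forall r, f r = g r) -> d = d' -> isD x f d -> isD x g d'.
Proof. by move=> /funext -> ->. Qed.

Lemma D_scale (c : RR) (f : RR -> RR) (x d : RR) :
  isD x f d -> isD x (fun r => c * f r) (c * d).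
Proof.
move=> H; have := D_comp (D_aff 0 c (f x)) H.
by apply: D_ext => [r|]; ring.
Qed.

Arguments D_scale c {f x d}.
Arguments D_ext {f g x d d'}.
Arguments D_sum {n F x dF}.
Arguments D_ln {x}.

Lemma rowdot_lin p d (V D : 'M[RR]_(2 * p, d.+1)) k xs r :
  rowdot (V + r *: D) k xs = rowdot V k xs + r * rowdot D k xs.
Proof.
rewrite /rowdot mulr_sumr -big_split; apply: eq_bigr => j _; rewrite !mxE /=; ring.
Qed.

Lemma hwidth_gt0 p : (1 <= p)%N -> 0 < hwidth p.
Proof. by move=> p1; rewrite /hwidth invr_gt0 ltr0n. Qed.

Definition dfnet p d (V D : 'M[RR]_(2 * p, d.+1)) xs :=
  \sum_(k < 2 * p) uw k * (dphi (hwidth p) (rowdot V k xs) * rowdot D k xs).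
Arguments dfnet {p d}.

Lemma D_fnet p d (V D : 'M[RR]_(2 * p, d.+1)) xs : (1 <= p)%N ->
  isD 0 (fun r => fnet (V + r *: D) xs) (dfnet V D xs).
Proof.
move=> p1; have h0 := @hwidth_gt0 p p1.
apply: (@D_ext (fun r => \sum_(k < 2 * p) (fun k r => uw k * hrelu (hwidth p) (rowdot V k xs + r * rowdot D k xs)) k r)).
- by move=> r; rewrite /fnet; apply: eq_bigr => k _; rewrite rowdot_lin.
- by [].
apply: D_sum => k; apply: D_scale.
have := @D_comp (hrelu (hwidth p)) (fun r => rowdot V k xs + r * rowdot D k xs) 0 _ _ (hrelu_derive _ (rowdot V k xs + 0 * rowdot D k xs) h0) (D_aff (rowdot V k xs) (rowdot D k xs) 0).
by apply: D_ext => //; rewrite mul0r addr0.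
Qed.

Definition gq n p d (x : 'I_n -> 'rV[RR]_(d.+1)) (y : 'I_n -> RR) (V : 'M[RR]_(2 * p, d.+1)) s :=
  - (y s * fnet V (x s)).
Arguments gq {n p d}.

Definition dloss n p d (x : 'I_n -> 'rV[RR]_(d.+1)) (y : 'I_n -> RR) (V D : 'M[RR]_(2 * p, d.+1)) :=
  (n%:R)^-1 * \sum_(s < n) (- (expR (gq x y V s) / (1 + expR (gq x y V s)) * y s * dfnet V D (x s))).
Arguments dloss {n p d}.

Lemma D_loss n p d (x : 'I_n -> 'rV[RR]_(d.+1)) (y : 'I_n -> RR) (V D : 'M[RR]_(2 * p, d.+1)) :
  (1 <= p)%N -> isD 0 (fun r => loss x y (V + r *: D)) (dloss x y V D).
Proof.
move=> p1.
have HT : forall s : 'I_n, isD 0 (fun r => ln (1 + expR (- (y s * fnet (V + r *: D) (x s)))))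
   ((1 + expR (- (y s * fnet (V + 0 *: D) (x s))))^-1 *
     (1 * (expR (- (y s * fnet (V + 0 *: D) (x s))) * (-1 * (y s * dfnet V D (x s)))))).
  move=> s.
  have H1 := @D_fnet p d V D (x s) p1.
  have H2 := D_scale (y s) H1.
  have H3 := D_scale (-1) H2.
  have H3' : isD 0 (fun r => - (y s * fnet (V + r *: D) (x s))) (-1 * (y s * dfnet V D (x s))).
    by apply: D_ext H3 => // r; rewrite mulN1r.
  have H4 := @D_comp (@expR RR) _ 0 _ _ (D_expR _) H3'.
  have H5 := @D_comp (fun t => 1 + t * 1) _ 0 _ _ (D_aff 1 1 _) H4.
  have H5' : isD 0 (fun r => 1 + expR (- (y s * fnet (V + r *: D) (x s))))
     (1 * (expR (- (y s * fnet (V + 0 *: D) (x s))) * (-1 * (y s * dfnet V D (x s))))).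
    by apply: D_ext H5 => // r; rewrite mulr1.
  have pos : 0 < 1 + expR (- (y s * fnet (V + 0 *: D) (x s))).
    by rewrite ltr_pwDr ?expR_gt0.
  exact: (@D_comp (@ln RR) _ 0 _ _ (D_ln pos) H5').
have HS := D_scale (n%:R^-1) (D_sum HT).
apply: D_ext HS => //.
rewrite /dloss /gq scale0r addr0; congr (_ * _); apply: eq_bigr => s _.
rewrite mulrC; ring.
Qed.

Lemma rowdot_add p d (A B : 'M[RR]_(2 * p, d.+1)) k xs :
  rowdot (A + B) k xs = rowdot A k xs + rowdot B k xs.
Proof. rewrite /rowdot -big_split; apply: eq_bigr => j _; rewrite !mxE /=; ring. Qed.

Lemma rowdot_scale p d (A : 'M[RR]_(2 * p, d.+1)) c k xs :
  rowdot (c *: A) k xs = c * rowdot A k xs.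
Proof. rewrite /rowdot mulr_sumr; apply: eq_bigr => j _; rewrite !mxE /=; ring. Qed.

Lemma dloss_add n p d (x : 'I_n -> 'rV[RR]_(d.+1)) (y : 'I_n -> RR) (W A B : 'M[RR]_(2 * p, d.+1)) :
  dloss x y W (A + B) = dloss x y W A + dloss x y W B.
Proof.
rewrite /dloss -mulrDr -big_split; congr (_ * _); apply: eq_bigr => s _ /=.
rewrite /dfnet -opprD -mulrDr -big_split; congr (- (_ * _)); apply: eq_bigr => k _ /=.
rewrite rowdot_add; ring.
Qed.

Lemma dloss_scale n p d (x : 'I_n -> 'rV[RR]_(d.+1)) (y : 'I_n -> RR) (W A : 'M[RR]_(2 * p, d.+1)) c :
  dloss x y W (c *: A) = c * dloss x y W A.
Proof.
have Hd : forall xs, dfnet W (c *: A) xs = c * dfnet W A xs.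
  move=> xs; rewrite /dfnet mulr_sumr; apply: eq_bigr => k _; rewrite rowdot_scale; ring.
rewrite /dloss [RHS]mulrCA [in RHS]mulr_sumr; congr (_ * _); apply: eq_bigr => s _.
rewrite Hd; ring.
Qed.

Lemma lin_delta m k (Phi : 'M[RR]_(m, k) -> RR) :
  (forall A B, Phi (A + B) = Phi A + Phi B) -> (forall c A, Phi (c *: A) = c * Phi A) ->
  forall W, Phi W = \sum_(i < m) \sum_(j < k) W i j * Phi (delta_mx i j).
Proof.
move=> Hadd Hsc W.
have H0 : Phi 0 = 0 by rewrite -(scale0r 0) Hsc mul0r.
rewrite {1}(matrix_sum_delta W) (big_morph Phi Hadd H0); apply: eq_bigr => i _.
rewrite (big_morph Phi Hadd H0); apply: eq_bigr => j _; exact: Hsc.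
Qed.

Lemma gradM_eq n p d (x : 'I_n -> 'rV[RR]_(d.+1)) (y : 'I_n -> RR) (W : 'M[RR]_(2 * p, d.+1)) i j :
  (1 <= p)%N -> gradM (loss x y) W i j = dloss x y W (delta_mx i j).
Proof.
move=> p1; rewrite mxE derive1E.
have H := @D_loss n p d x y W (delta_mx i j) p1.
exact: derive_val.
Qed.

Lemma phi_gap h z : 0 < h -> 0 <= dphi h z * z - hrelu h z <= h / 2.
Proof.
move=> h0.
have E : forall a, a ^+ 2 / (2 * h) = a ^+ 2 * h^-1 / 2 by move=> a; rewrite invfM; field; rewrite gt_eqF.
rewrite /hrelu /dphi !E.
have hk : h * h^-1 = 1 by rewrite divff // gt_eqF.
have k0 : 0 < h^-1 by rewrite invr_gt0.
rewrite -[z / h]/(z * h^-1).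
set k := h^-1 in hk k0 *.
have hkh : k * h * h = h by rewrite mulrC mulrA hk mul1r.
have p1 : 0 <= k * z ^+ 2 by rewrite mulr_ge0 // ?sqr_ge0 // ltW.
have P : 0 <= z -> z <= h -> 0 <= k * (h - z) * (h + z).
  move=> a b; apply: mulr_ge0; [apply: mulr_ge0|]; [exact: ltW|lra|lra].
case: (ltrP z 0) => hz; try case: (lerP z h) => hz2; apply/andP; split; try nra.
Qed.

Lemma sum_if_lt p (c : RR) :
  \sum_(k < 2 * p) (if (nat_of_ord k < p)%N then c else 0) = c *+ p.
Proof.
rewrite -(big_mkord xpredT (fun k => if (k < p)%N then c else 0)).
rewrite (big_cat_nat (n := p)) //=; last by rewrite leq_pmull.
rewrite (eq_big_nat _ _ (F2 := fun=> c)); last by move=> i /andP [_ ->].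
rewrite sumr_const_nat subn0 big1_seq ?addr0 // => i; rewrite mem_index_iota => /andP [_ /andP [pi _]].
by rewrite ltnNge pi.
Qed.

Lemma sum_if_ge p (c : RR) :
  \sum_(k < 2 * p) (if (nat_of_ord k < p)%N then 0 else c) = c *+ p.
Proof.
rewrite -(big_mkord xpredT (fun k => if (k < p)%N then 0 else c)).
rewrite (big_cat_nat (n := p)) //=; last by rewrite leq_pmull.
rewrite big1_seq ?add0r; last first.
  by move=> i; rewrite mem_index_iota => /andP [_ /andP [_ ->]].
rewrite (eq_big_nat _ _ (F2 := fun=> c)); last first.
  by move=> i /andP [pi _]; rewrite ltnNge pi.
by rewrite sumr_const_nat mul2n -addnn addnK.
Qed.

Lemma uw_bound p (e : 'I_(2 * p) -> RR) (yy : RR) : (1 <= p)%N ->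
  (yy = 1 \/ yy = -1) -> (forall k, 0 <= e k <= hwidth p / 2) ->
  - (1 / 2) <= yy * \sum_(k < 2 * p) uw k * e k.
Proof.
move=> p1 hy he.
have hp : hwidth p / 2 *+ p = 1 / 2.
  rewrite -mulr_natl /hwidth mulrA mulfV ?pnatr_eq0 -?lt0n //.
have up : \sum_(k < 2 * p) uw k * e k <= 1 / 2.
  rewrite -hp -sum_if_lt; apply: ler_sum => k _; rewrite /uw.
  case: ifP => _; have := he k; lra.
have lo : - (1 / 2) <= \sum_(k < 2 * p) uw k * e k.
  rewrite -hp -sum_if_ge -sumrN; apply: ler_sum => k _; rewrite /uw.
  case: ifP => _; have := he k; lra.
case: hy => ->; lra.
Qed.

Lemma ln_ge1 (x : RR) : 0 < x -> 1 - x^-1 <= ln x.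
Proof.
move=> x0.
have := @le_ln1Dx _ (x^-1 - 1).
rewrite (_ : 1 + (x^-1 - 1) = x^-1); last by ring.
rewrite lnV ?posrE // => H.
have : - ln x <= x^-1 - 1 by apply: H; rewrite ltrBrDl addrN invr_gt0.
lra.
Qed.

Lemma num_main (n L C1 m : RR) : 2 <= n -> 0 < L -> 200 <= C1 ->
  ln L <= - ((1 + C1) * ln n) -> ln (1 + expR (- m)) <= n * L ->
  5 / 6 * ln (1 + expR (- m)) * (- ln L) <=
    expR (- m) / (1 + expR (- m)) * (m - 1 / 2).
Proof.
move=> n2 L0 C1b hL hl.
set E := expR (- m) in hl *.
have E0 : 0 < E by apply: expR_gt0.
set l := ln (1 + E) in hl *.
set Lam := - ln L.
have n0 : 0 < n by lra.
have ln2 : 1 / 2 <= ln n.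
  have := @ln_ge1 n n0.
  have : n^-1 <= 2^-1 by rewrite lef_pV2 ?posrE //; lra.
  lra.
have lnn1 : ln n <= n - 1 by have := @le_ln1Dx _ (n - 1); rewrite (_ : 1 + (n - 1) = n); [apply; lra|ring].
have LamB : (1 + C1) * ln n <= Lam by rewrite /Lam; lra.
have lnnB : 201 * ln n <= Lam.
  have : 0 <= (C1 - 200) * ln n by apply: mulr_ge0; lra.
  lra.
have Lam100 : 100 <= Lam by lra.
have a0 : 0 < n * L by apply: mulr_gt0.
have lna : ln (n * L) <= - 100.
  rewrite lnM ?posrE //; nra.
have aB : n * L <= 1 / 101.
  rewrite -(lnK a0).
  apply: (le_trans (_ : _ <= expR (-100))); first by rewrite ler_expR.
  rewrite expRN.
  have : 1 + 100 <= expR (100:RR) by apply: expR_ge1Dx.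
  move=> H. rewrite -div1r ler_pdivrMr ?expR_gt0 //.
  lra.
have lE : E / (1 + E) <= l.
  have := @ln_ge1 (1 + E).
  have -> : 1 - (1 + E)^-1 = E / (1 + E) by field; lra.
  apply; lra.
have El : l <= E by apply: le_ln1Dx; lra.
have E2a : E <= 2 * (n * L).
  move: lE; rewrite ler_pdivrMr; last lra.
  set a := n * L in aB hl *. nra.
have mB : Lam - ln n - 1 <= m.
  have : ln E <= ln (2 * (n * L)) by rewrite ler_ln ?posrE // mulr_gt0.
  rewrite /E expRK lnM ?posrE // ?mulr_gt0 // lnM ?posrE //.
  have H2 : ln (1 + 1 : RR) <= 1 by apply: le_ln1Dx; lra.
  have : ln (2:RR) <= 1 by exact: H2.
  rewrite /Lam; lra.
have l0 : 0 <= l by apply: ln_ge0; lra.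
have E2 : E <= 2 / 101 by lra.
rewrite [X in _ <= X]mulrAC ler_pdivlMr; last lra.
have h1 : 5 / 6 * l * Lam * (1 + E) <= 5 / 6 * E * Lam * (103 / 101).
  apply: ler_pM; first by nra.
  - lra.
  - apply: ler_pM; [nra|nra|nra|lra].
  - lra.
apply: (le_trans h1).
have h2 : 5 / 6 * Lam * (103 / 101) <= m - 1 / 2 by nra.
nra.
Qed.

Lemma sumsq0 (m k : nat) (A : 'M[RR]_(m, k)) :
  \sum_(i < m) \sum_(j < k) A i j ^+ 2 = 0 -> forall i j, A i j = 0.
Proof.
move=> /eqP; rewrite psumr_eq0; last by move=> i _; apply: sumr_ge0 => j _; apply: sqr_ge0.
move=> /allP H i j.
have := H i (mem_index_enum i); rewrite implyTb psumr_eq0; last by move=> *; apply: sqr_ge0.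
move=> /allP /(_ j (mem_index_enum j)); rewrite implyTb sqrf_eq0 => /eqP //.
Qed.

Lemma frob_ge0 (m k : nat) (A : 'M[RR]_(m, k)) : 0 <= frob A.
Proof. exact: sqrtr_ge0. Qed.

Lemma cauchy_schwarz (m k : nat) (A B : 'M[RR]_(m, k)) :
  \sum_(i < m) \sum_(j < k) A i j * B i j <= frob A * frob B.
Proof.
set SA := \sum_(i < m) \sum_(j < k) A i j ^+ 2.
set SB := \sum_(i < m) \sum_(j < k) B i j ^+ 2.
have SA0 : 0 <= SA by apply: sumr_ge0 => i _; apply: sumr_ge0 => j _; apply: sqr_ge0.
have SB0 : 0 <= SB by apply: sumr_ge0 => i _; apply: sumr_ge0 => j _; apply: sqr_ge0.
have fge : 0 <= frob A * frob B by apply: mulr_ge0; apply: sqrtr_ge0.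
case: (eqVneq SA 0) => [hA|hA].
  have Z := @sumsq0 _ _ A hA.
  by rewrite big1 // => i _; rewrite big1 // => j _; rewrite Z mul0r.
case: (eqVneq SB 0) => [hB|hB].
  have Z := @sumsq0 _ _ B hB.
  by rewrite big1 // => i _; rewrite big1 // => j _; rewrite Z mulr0.
have SAp : 0 < SA by rewrite lt_neqAle eq_sym hA.
have SBp : 0 < SB by rewrite lt_neqAle eq_sym hB.
rewrite /frob -/SA -/SB.
set a := Num.sqrt SA; set b := Num.sqrt SB.
have a0 : 0 < a by rewrite sqrtr_gt0.
have b0 : 0 < b by rewrite sqrtr_gt0.
have aa : a ^+ 2 = SA by rewrite sqr_sqrtr // ltW.
have bb : b ^+ 2 = SB by rewrite sqr_sqrtr // ltW.
have key : \sum_(i < m) \sum_(j < k) (2 * (a * b)) * (A i j * B i j) <=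
   \sum_(i < m) \sum_(j < k) (b ^+ 2 * A i j ^+ 2 + a ^+ 2 * B i j ^+ 2).
  apply: ler_sum => i _; apply: ler_sum => j _.
  have := sqr_ge0 (b * A i j - a * B i j); nra.
set S := \sum_(i < m) \sum_(j < k) A i j * B i j.
have key2 : 2 * (a * b) * S <= b ^+ 2 * SA + a ^+ 2 * SB.
  have E1 : \sum_(i < m) \sum_(j < k) (2 * (a * b)) * (A i j * B i j) = 2 * (a * b) * S.
    by rewrite /S mulr_sumr; apply: eq_bigr => i _; rewrite mulr_sumr.
  have E2 : \sum_(i < m) \sum_(j < k) (b ^+ 2 * A i j ^+ 2 + a ^+ 2 * B i j ^+ 2) = b ^+ 2 * SA + a ^+ 2 * SB.
    rewrite /SA /SB !mulr_sumr -big_split; apply: eq_bigr => i _; rewrite !mulr_sumr -big_split //.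
  by rewrite -E1 -E2.
rewrite -aa -bb in key2.
have ab0 : 0 < a * b by apply: mulr_gt0.
nra.
Qed.

Lemma frob_opp m k (A : 'M[RR]_(m, k)) : frob (- A) = frob A.
Proof.
rewrite /frob; congr Num.sqrt; apply: eq_bigr => i _; apply: eq_bigr => j _.
by rewrite mxE sqrrN.
Qed.

Lemma cs_neg m k (A B : 'M[RR]_(m, k)) :
  - (\sum_(i < m) \sum_(j < k) A i j * B i j) <= frob A * frob B.
Proof.
have := @cauchy_schwarz m k (- A) B; rewrite frob_opp.
apply: le_trans; rewrite -sumrN le_eqVlt; apply/orP; left; apply/eqP.
apply: eq_bigr => i _; rewrite -sumrN; apply: eq_bigr => j _; rewrite mxE mulNr //.
Qed.

Theorem lemma6 :
  exists C0 : RR, forall C1 : RR, C0 <= C1 ->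
  forall (n d p : nat) (x : 'I_n -> 'rV[RR]_(d.+1)) (y : 'I_n -> RR),
  (2 <= n)%N -> (1 <= p)%N ->
  (forall s, vnorm (x s) = 1) ->
  (forall s, y s = 1 \/ y s = -1) ->
  forall (V : nat -> 'M[RR]_(2 * p, d.+1)) (alpha : nat -> RR),
  (forall t, (1 <= t)%N ->
     V t.+1 = V t - alpha t *: gradM (loss x y) (V t)) ->
  forall t, (1 <= t)%N ->
  loss x y (V t) <= (n%:R `^ (1 + C1))^-1 ->
  frob (gradM (loss x y) (V t)) >=
    5 * loss x y (V t) * ln ((loss x y (V t))^-1) / (6 * frob (V t)).
Proof.
exists 200 => C1 hC n d p x y n2 p1 _ hy V alpha _ t _.
move: (V t) => W.
set G := gradM (loss x y) W.
set L := loss x y W.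
move=> hL.
have nR : 2 <= n%:R :> RR by rewrite (ler_nat RR 2 n).
have n0 : 0 < n%:R :> RR by lra.
pose l s := ln (1 + expR (- (y s * fnet W (x s)))).
have Ldef : L = n%:R^-1 * \sum_(s < n) l s by [].
have l0 : forall s, 0 < l s.
  by move=> s; apply: ln_gt0; rewrite ltrDl expR_gt0.
have lS : forall s, l s <= \sum_(s0 < n) l s0.
  move=> s; rewrite (bigD1 s) //= lerDl; apply: sumr_ge0 => i _; exact: ltW.
have s0 : 'I_n by exists 0%N; exact: ltnW.
have L0 : 0 < L.
  rewrite Ldef; apply: mulr_gt0; first by rewrite invr_gt0.
  exact: (lt_le_trans (l0 s0) (lS s0)).
have la : forall s, l s <= n%:R * L.
  by move=> s; rewrite Ldef mulrA mulfV ?mul1r ?lS // gt_eqF.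
have hLn : ln L <= - ((1 + C1) * ln n%:R).
  have pp : 0 < n%:R `^ (1 + C1) by apply: powR_gt0.
  have H : ln L <= ln ((n%:R `^ (1 + C1))^-1) by rewrite ler_ln ?posrE ?invr_gt0.
  by rewrite lnV ?posrE // ln_powR in H.
have num : forall s, 5 / 6 * l s * (- ln L) <=
    expR (- (y s * fnet W (x s))) / (1 + expR (- (y s * fnet W (x s)))) * (y s * fnet W (x s) - 1 / 2).
  move=> s; apply: (@num_main n%:R L C1 (y s * fnet W (x s)) nR L0 _ hLn (la s)); lra.
have h0 := @hwidth_gt0 p p1.
have gap : forall s, y s * fnet W (x s) - 1 / 2 <= y s * dfnet W W (x s).
  move=> s.
  have -> : dfnet W W (x s) = fnet W (x s) +
     \sum_(k < 2 * p) uw k * (dphi (hwidth p) (rowdot W k (x s)) * rowdot W k (x s) - hrelu (hwidth p) (rowdot W k (x s))).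
    rewrite /dfnet /fnet -big_split; apply: eq_bigr => k _ /=; ring.
  have := @uw_bound p (fun k => dphi (hwidth p) (rowdot W k (x s)) * rowdot W k (x s) - hrelu (hwidth p) (rowdot W k (x s))) (y s) p1 (hy s).
  have : forall k : 'I_(2 * p), 0 <= dphi (hwidth p) (rowdot W k (x s)) * rowdot W k (x s) - hrelu (hwidth p) (rowdot W k (x s)) <= hwidth p / 2.
    by move=> k; apply: phi_gap.
  move=> H /(_ H).
  rewrite mulrDr; lra.
have main : 5 / 6 * L * (- ln L) <= - dloss x y W W.
  have -> : 5 / 6 * L * (- ln L) = n%:R^-1 * \sum_(s < n) (5 / 6 * l s * (- ln L)).
    rewrite -mulr_suml -mulr_sumr {1}Ldef; ring.
  rewrite /dloss -mulrN -sumrN; apply: ler_wpM2l; first by rewrite invr_ge0 ltW.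
  apply: ler_sum => s _.
  rewrite opprK.
  apply: (le_trans (_ : _ <= expR (- (y s * fnet W (x s))) / (1 + expR (- (y s * fnet W (x s)))) * (y s * fnet W (x s) - 1 / 2))).
    by have := num s; rewrite /l; lra.
  rewrite /gq -[in X in _ <= X]mulrA; apply: ler_wpM2l; last exact: gap.
  by apply: divr_ge0; [exact: expR_ge0 | rewrite addr_ge0 // expR_ge0].
have ip : dloss x y W W = \sum_(i < 2 * p) \sum_(j < d.+1) W i j * G i j.
  rewrite (@lin_delta _ _ _ (@dloss_add _ _ _ x y W) (fun c A => @dloss_scale _ _ _ x y W A c) W).
  apply: eq_bigr => i _; apply: eq_bigr => j _; rewrite /G gradM_eq //.
have cs := @cs_neg _ _ W G.
rewrite -ip in cs.
rewrite lnV ?posrE //.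
have fW := @frob_ge0 _ _ W; have fG := @frob_ge0 _ _ G.
case: (eqVneq (frob W) 0) => [->|fW0].
  by rewrite mulr0 invr0 mulr0.
have fWp : 0 < frob W by rewrite lt_neqAle eq_sym fW0.
rewrite ler_pdivrMr ?mulr_gt0 //.
nra.
Qed.
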